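(* For integers $m\ge1$, $n\ge1$, let $\Delta_{m,n}$ be the subgraph of the integer lattice graph $\mathbb{Z}^m$ induced by $\{x\in\mathbb{Z}^m: 0\le x_1\le\cdots\le x_m\le n\}$. Then the map $\phi:I_m^{(n)}\to\Delta_{m,n}$, $\phi(\mathbf{x})=(\phi_1(\mathbf{x}),\dots,\phi_m(\mathbf{x}))$ with $\phi_k(\mathbf{x})=\sum_{i=m-k+1}^m\mathbf{x}(i)$, is a graph isomorphism. Consequently $I_m^{(n)}\cong F_m(I_{n+m-1})$.
   Context: $I_m$ is the path graph on vertices $\{0,1,\dots,m\}$ with $i\sim i+1$. $\mathbb{Z}^m$ is the graph on integer points with $x\sim y$ iff $\sum_i|x_i-y_i|=1$. $I_m^{(n)}$ is the $n$th reduced power of $I_m$: vertices are degree-$n$ monomials $\mathbf{x}$ in the vertices of $I_m$, with $\mathbf{x}(i)$ the multiplicity of vertex $i$, two monomials adjacent iff they differ by moving one token along one edge. $F_m(H)$ is the $m$-token graph of $H$: vertices are $m$-element subsets of $V(H)$, adjacent iff their symmetric difference is $\{u,v\}$ for an edge $uv$ of $H$. *)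

(* Defs.v *)
From mathcomp Require Import all_boot all_order all_algebra.
Set Implicit Arguments. Unset Strict Implicit. Unset Printing Implicit Defensive.
Import Order.TTheory GRing.Theory Num.Theory.

Definition is_graph_iso (V W : Type) (PV : V -> Prop) (EV : V -> V -> Prop)
  (PW : W -> Prop) (EW : W -> W -> Prop) (f : V -> W) : Prop :=
  [/\ (forall x, PV x -> PW (f x)),
      (forall x y, PV x -> PV y -> f x = f y -> x = y),
      (forall z, PW z -> exists2 x, PV x & f x = z)
    & (forall x y, PV x -> PV y -> (EV x y <-> EW (f x) (f y)))].

Definition graphs_isomorphic (V W : Type) (PV : V -> Prop) (EV : V -> V -> Prop)
  (PW : W -> Prop) (EW : W -> W -> Prop) : Prop :=
  exists f : V -> W, is_graph_iso PV EV PW EW f.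

(* Edges of the path graph I_m on {0,...,m} (here on 'I_m.+1, or any ordinal type). *)
Definition path_edge (N : nat) (i j : 'I_N) : bool := (i.+1 == j) || (j.+1 == i).

(* Reduced power I_m^(n): degree-n monomials in the m+1 vertices of I_m,
   encoded by their multiplicity functions x : 'I_m.+1 -> nat. *)
Definition redpow_vertex (m n : nat) (x : {ffun 'I_m.+1 -> nat}) : Prop :=
  (\sum_(i < m.+1) x i)%N = n.

(* y is obtained from x by moving one token from i to j along an edge ij,
   i.e. y = x - e_i + e_j (in nat, which forces x i >= 1). *)
Definition redpow_adj (m : nat) (x y : {ffun 'I_m.+1 -> nat}) : Prop :=
  exists i j : 'I_m.+1, path_edge i j /\
    (forall k, y k + (k == i) = x k + (k == j))%N.

(* Delta_{m,n}: induced subgraph of Z^m on 0 <= y_1 <= ... <= y_m <= n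
   (coordinates indexed 0..m-1). *)
Definition delta_vertex (m n : nat) (y : {ffun 'I_m -> int}) : Prop :=
  forall i j : 'I_m, (i <= j)%N -> (0 <= y i /\ y i <= y j /\ y j <= Posz n)%R.

Definition lattice_adj (m : nat) (y z : {ffun 'I_m -> int}) : Prop :=
  (\sum_(i < m) `|y i - z i|)%R = 1%R.

(* phi_k(x) = sum_{i=m-k+1}^m x(i), k = 1..m; with 0-based k' = k-1 this is
   the sum over i >= m - k'. *)
Definition phi (m : nat) (x : {ffun 'I_m.+1 -> nat}) : {ffun 'I_m -> int} :=
  [ffun k : 'I_m => Posz (\sum_(i < m.+1 | (m - k <= i)%N) x i)%N].

(* Token graph F_m(I_N) with I_N on vertices 'I_N.+1 = {0..N}. *)
Definition token_vertex (m N : nat) (A : {set 'I_N.+1}) : Prop := #|A| = m.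

Definition token_adj (N : nat) (A B : {set 'I_N.+1}) : Prop :=
  exists u v : 'I_N.+1, path_edge u v /\ (A :\: B) :|: (B :\: A) = [set u; v].

(* Main.v *)
Require Import Defs.
From mathcomp Require Import all_boot all_order all_algebra.
From mathcomp Require Import zify.
Import Order.TTheory GRing.Theory Num.Theory.
Set Implicit Arguments. Unset Strict Implicit. Unset Printing Implicit Defensive.

Lemma lattice_adjP m (f g : 'I_m -> nat) :
  lattice_adj [ffun k => Posz (f k)] [ffun k => Posz (g k)] <->
  exists k0, (forall l, g l = f l + (l == k0))%N \/ (forall l, f l = g l + (l == k0))%N.
Proof.
split.
- rewrite /lattice_adj => H.
  case: (boolP [exists k, f k != g k]) => [/existsP [k0 Hk0] | /existsP Hn]; last first.
    exfalso; move: H; rewrite big1 // => l _; rewrite !ffunE.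
    have : f l = g l by apply/eqP; apply/negPn; apply/negP => Hl; apply: Hn; exists l.
    by move=> ->; rewrite subrr.
  move: H; rewrite (bigD1 k0) //=.
  set S := (\sum_(i < m | _) _)%R.
  have Hr : (0 <= S)%R by apply: sumr_ge0 => i _.
  rewrite !ffunE => H.
  have Hk : (1 <= `|Posz (f k0) - Posz (g k0)|)%R.
    move/eqP: Hk0 => Hk0; clear -Hk0; lia.
  have H0 : (S = 0)%R by lia.
  have H1 : (`|Posz (f k0) - Posz (g k0)| = 1)%R by lia.
  have Heq : forall l, l != k0 -> f l = g l.
    move=> l Hl; move/psumr_eq0P: H0 => /(_ (fun i _ => normr_ge0 _) l Hl).
    rewrite !ffunE => /eqP; rewrite normr_eq0 subr_eq0 => /eqP [] //.
  exists k0.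
  have [Hg|Hf] : (g k0 = f k0 + 1 \/ f k0 = g k0 + 1)%N by lia.
  + left => l; case: (eqVneq l k0) => [->|Hl] //=; rewrite Heq // addn0 //.
  + right => l; case: (eqVneq l k0) => [->|Hl] //=; rewrite Heq // addn0 //.
- move=> [k0 H]; rewrite /lattice_adj (bigD1 k0) //= big1 => [|l Hl]; rewrite !ffunE.
  + case: H => H; rewrite H eqxx; lia.
  + case: H => H; rewrite H (negbTE Hl) addn0 subrr //.
Qed.

Lemma card_lt_ord M k : (k <= M)%N -> #|[set l : 'I_M | (val l < k)%N]| = k.
Proof.
move=> hk.
have -> : [set l : 'I_M | (val l < k)%N] = [set widen_ord hk i | i : 'I_k].
  apply/setP => l; rewrite !inE; apply/idP/imsetP.
  - move=> hl; exists (Ordinal hl) => //; exact: val_inj.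
  - by move=> [i _ ->] /=.
rewrite card_imset ?card_ord //.
by move=> i j /(congr1 val) /= /val_inj.
Qed.

Lemma card_swap (T : finType) (X Y : {set T}) u v :
  u \in X -> v \in Y -> X :\ u = Y :\ v -> #|X| = #|Y|.
Proof. by move=> hu hv he; rewrite (cardsD1 u X) (cardsD1 v Y) hu hv he. Qed.

Lemma iso_comp (U V W : Type) PU EU PV EV PW EW (f : U -> V) (g : V -> W) :
  is_graph_iso PU EU PV EV f -> is_graph_iso PV EV PW EW g ->
  is_graph_iso PU EU PW EW (fun x => g (f x)).
Proof.
move=> [f1 f2 f3 f4] [g1 g2 g3 g4]; split.
- by move=> x hx; apply: g1; apply: f1.
- by move=> x y hx hy /g2 h; apply: f2 => //; apply: h; apply: f1.
- move=> z /g3 [y hy <-]; have [x hx <-] := f3 y hy; by exists x.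
- move=> x y hx hy; rewrite f4 // g4 //; exact: f1.
Qed.
Definition T m (x : {ffun 'I_m.+1 -> nat}) (j : nat) : nat :=
  (\sum_(i < m.+1 | (j <= i)%N) x i)%N.

Lemma T_rec m (x : {ffun 'I_m.+1 -> nat}) j : (j <= m)%N ->
  T x j = (x (inord j) + T x j.+1)%N.
Proof.
move=> hj; rewrite /T (bigD1 (inord j)) /=; last by rewrite inordK.
congr addn; apply: eq_bigl => i.
rewrite -val_eqE /= inordK // [(j < i)%N]ltn_neqAle eq_sym andbC; lia.
Qed.

Lemma T_end m (x : {ffun 'I_m.+1 -> nat}) : T x m.+1 = 0%N.
Proof. by rewrite /T big_pred0 // => i; rewrite leqNgt ltn_ord. Qed.

Lemma T_0 m (x : {ffun 'I_m.+1 -> nat}) : T x 0 = (\sum_(i < m.+1) x i)%N.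
Proof. by rewrite /T; apply: eq_bigl. Qed.

Lemma T_anti m (x : {ffun 'I_m.+1 -> nat}) j j' : (j <= j')%N -> (T x j' <= T x j)%N.
Proof.
move=> h; rewrite /T [X in (_ <= X)%N](bigID (fun i : 'I_m.+1 => (j' <= i)%N)) /=.
apply: (leq_trans _ (leq_addr _ _)); rewrite leq_eqVlt; apply/orP; left; apply/eqP.
apply: eq_bigl => i.
by case h': (j' <= i)%N; rewrite ?andbT ?andbF // (leq_trans h h').
Qed.

Lemma down_ind (P : nat -> Prop) M : P M -> (forall t, (t < M)%N -> P t.+1 -> P t) ->
  forall t, (t <= M)%N -> P t.
Proof.
move=> h0 hs t ht; move: {2}(M - t)%N (erefl (M - t)%N) => d; elim: d t ht => [|d IH] t ht hd.
  by have -> : t = M by lia.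
apply: hs; first lia. apply: IH; lia.
Qed.

Lemma adj_T m (x x' : {ffun 'I_m.+1 -> nat}) (i j : 'I_m.+1) :
  (forall k, x' k + (k == i) = x k + (k == j))%N ->
  forall t, (t <= m.+1)%N -> (T x' t + (t <= i) = T x t + (t <= j))%N.
Proof.
move=> H; apply: down_ind.
  by rewrite !T_end leqNgt ltn_ord /= leqNgt ltn_ord.
move=> t ht IH; rewrite (T_rec x' ht) (T_rec x ht).
have := H (inord t); rewrite -!val_eqE /= !inordK //.
have E (k : 'I_m.+1) : ((t <= k)%N = (t == k) + (t < k)%N :> nat)%N.
  by rewrite leq_eqVlt; case: eqP => //= ->; rewrite ltnn.
rewrite E [(t <= j)%N : nat]E.
move: IH; rewrite -/(leq t.+1 i) -/(leq t.+1 j).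
move: (t == i :> nat) (t == j :> nat) (t < i)%N (t < j)%N => a b c d. lia.
Qed.

Lemma phiE m (x : {ffun 'I_m.+1 -> nat}) k : phi x k = Posz (T x (m - k)).
Proof. by rewrite ffunE. Qed.

Lemma phi_ffun m (x : {ffun 'I_m.+1 -> nat}) : phi x = [ffun k : 'I_m => Posz (T x (m - k))].
Proof. by []. Qed.

Lemma delta_nat m n (y : {ffun 'I_m -> int}) : delta_vertex n y ->
  forall i j : 'I_m, (i <= j)%N -> (`|y i| <= `|y j| <= n)%N.
Proof. by move=> h i j /h; lia. Qed.

Lemma redpow_adj_sym m (x x' : {ffun 'I_m.+1 -> nat}) : redpow_adj x x' -> redpow_adj x' x.
Proof.
move=> [i [j [he H]]]; exists j, i; split; first by rewrite /path_edge orbC.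
by move=> k; rewrite (H k).
Qed.

Lemma one_dir m n (x x' : {ffun 'I_m.+1 -> nat}) (k0 : 'I_m) :
  redpow_vertex n x -> redpow_vertex n x' ->
  (forall l : 'I_m, T x' (m - l) = T x (m - l) + (l == k0))%N -> redpow_adj x x'.
Proof.
rewrite /redpow_vertex => hx hx' H.
have k0m := ltn_ord k0.
have HT : forall t, (t <= m.+1)%N -> T x' t = (T x t + (t == m - k0))%N.
  move=> t ht.
  case: (eqVneq t 0) => [->|t0]; first by rewrite !T_0 hx hx'; lia.
  case: (eqVneq t m.+1) => [->|tm]; first by rewrite !T_end; lia.
  have hl : (m - t < m)%N by lia.
  have := H (Ordinal hl); rewrite -val_eqE /=.
  have -> : (m - (m - t) = t)%N by lia.
  move=> ->; congr addn; apply/eqP/eqP; lia.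
exists (inord (m - k0 - 1)), (inord (m - k0)); split.
  by rewrite /path_edge /= !inordK; [apply/orP; left; apply/eqP; lia|lia|lia].
move=> k.
have hk := ltn_ord k.
have := T_rec x hk; have := T_rec x' hk; rewrite inord_val.
have := HT k (ltnW hk); have := HT k.+1 hk.
rewrite -!val_eqE /= !inordK; try lia.
Qed.

Lemma part1 m n (hm : (1 <= m)%N) :
  is_graph_iso (@redpow_vertex m n) (@redpow_adj m)
               (@delta_vertex m n) (@lattice_adj m) (@phi m).
Proof.
split.
- move=> x hx i j hij; rewrite !phiE.
  have h1 := T_anti x (leq_sub2l m hij).
  have h2 := T_anti x (leq0n (m - j)).
  move: h2; rewrite T_0 hx => h2; lia.
- move=> x x' hx hx' he; apply/ffunP => i.
  have HT : forall t, (t <= m.+1)%N -> T x t = T x' t.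
    move=> t ht.
    case: (eqVneq t 0) => [->|t0]; first by rewrite !T_0 hx hx'.
    case: (eqVneq t m.+1) => [->|tm]; first by rewrite !T_end.
    have hl : (m - t < m)%N by lia.
    have := congr1 (fun f : {ffun _ -> _} => f (Ordinal hl)) he; rewrite /= !phiE /=.
    have -> : (m - (m - t) = t)%N by lia.
    by case.
  have hi := ltn_ord i.
  have := T_rec x hi; have := T_rec x' hi; rewrite inord_val.
  have := HT i (ltnW hi); have := HT i.+1 hi.
  move=> e1 e2 e3 e4; apply/eqP; rewrite -(eqn_add2r (T x i.+1)) -e4 e2 e3 e1 //.
- case: m hm => [//|m] hm y hy.
  have hY := delta_nat hy.
  pose Y k := `|y k|%N.
  pose W j := if j == 0%N then n else if (j <= m.+1)%N then Y (inord (m.+1 - j)) else 0%N.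
  have Wa : forall j, (j <= m.+1)%N -> (W j.+1 <= W j)%N.
    move=> j hj; rewrite /W /=.
    case: (eqVneq j 0) => [->|j0] /=.
      have := hY (inord (m.+1 - 1)) (inord (m.+1 - 1)) (leqnn _); rewrite /Y. lia.
    rewrite hj; case: leqP => hj1 //.
    have := hY (inord (m.+1 - j.+1)) (inord (m.+1 - j)); rewrite !inordK; try lia.
    move=> h; have := h ltac:(lia); rewrite /Y; lia.
  pose x := [ffun i : 'I_m.+2 => (W i - W i.+1)%N].
  have HT : forall t, (t <= m.+2)%N -> T x t = W t.
    apply: down_ind.
      by rewrite T_end /W /= ltnn.
    move=> t ht IH; rewrite (T_rec x ht) IH ffunE inordK //.
    have := Wa t ht; lia.
  exists x.
    by rewrite /redpow_vertex -T_0 HT.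
  apply/ffunP => k; rewrite phiE HT; last lia.
  rewrite /W; have hk := ltn_ord k.
  have -> : (m.+1 - k == 0)%N = false by apply/eqP; lia.
  have -> : (m.+1 - k <= m.+1)%N = true by apply/idP; lia.
  have -> : (inord (m.+1 - (m.+1 - k)) : 'I_m.+1) = k by apply: val_inj; rewrite /= inordK; lia.
  rewrite /Y; have [h0 _] := hy k k (leqnn _); by rewrite abszE ger0_norm.
- case: m hm => [//|m] hm x x' hx hx'; rewrite !phi_ffun; split.
  + move=> [i [j [he H]]].
    apply/(lattice_adjP (fun k : 'I_m.+1 => T x (m.+1 - k)) (fun k : 'I_m.+1 => T x' (m.+1 - k))).
    have hi := ltn_ord i; have hj := ltn_ord j.
    have HT := adj_T H.
    case/orP: he => /eqP he.
    * exists (inord (m.+1 - j)); left => l.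
      have := HT (m.+1 - l)%N ltac:(lia).
      rewrite -val_eqE /= inordK; lia.
    * exists (inord (m.+1 - i)); right => l.
      have := HT (m.+1 - l)%N ltac:(lia).
      rewrite -val_eqE /= inordK; lia.
  + move/(lattice_adjP (fun k : 'I_m.+1 => T x (m.+1 - k)) (fun k : 'I_m.+1 => T x' (m.+1 - k))).
    move=> [k0 [H|H]].
    * exact: (one_dir hx hx' H).
    * by apply: redpow_adj_sym; apply: (one_dir hx' hx H).
Qed.

Definition gv m (y : {ffun 'I_m -> int}) (k : 'I_m) : nat := (`|y k|%N + k)%N.

Definition psi m n (y : {ffun 'I_m -> int}) : {set 'I_(n + m - 1).+1} :=
  [set (inord (gv y k) : 'I_(n + m - 1).+1) | k : 'I_m].

Definition rank N (X : {set 'I_N}) (t : nat) := #|[set w in X | (val w < t)%N]|.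

Section Psi.
Variables (m n : nat) (y : {ffun 'I_m -> int}).
Hypothesis hy : delta_vertex n y.

Lemma gv_le (k : 'I_m) : (gv y k <= n + m - 1)%N.
Proof. have := delta_nat hy (leqnn k); have := ltn_ord k; rewrite /gv; lia. Qed.

Lemma gv_mono (k l : 'I_m) : (k < l)%N -> (gv y k < gv y l)%N.
Proof. move=> h; have := delta_nat hy (ltnW h); rewrite /gv; lia. Qed.

Lemma gv_inj (k l : 'I_m) : gv y k = gv y l -> k = l.
Proof.
move=> h; apply: val_inj; case: (ltngtP k l) => // hkl.
- by have := gv_mono hkl; rewrite h ltnn.
- by have := gv_mono hkl; rewrite h ltnn.
Qed.

Lemma inord_gv k : nat_of_ord (inord (gv y k) : 'I_(n + m - 1).+1) = gv y k.
Proof. by rewrite inordK // ltnS gv_le. Qed.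

Lemma mem_psi w : (w \in psi n y) = [exists k, val w == gv y k].
Proof.
apply/imsetP/existsP => [[k _ ->]|[k /eqP hk]]; exists k => //.
  by rewrite /= inord_gv.
by apply: val_inj; rewrite /= inord_gv.
Qed.

Lemma psi_inj : injective (fun k => (inord (gv y k) : 'I_(n + m - 1).+1)).
Proof. by move=> k l /(congr1 val); rewrite /= !inord_gv => /gv_inj. Qed.

Lemma card_psi : #|psi n y| = m.
Proof. by rewrite card_imset ?card_ord //; apply: psi_inj. Qed.

Lemma rank_psi k : rank (psi n y) (gv y k) = k.
Proof.
rewrite /rank.
have -> : [set w in psi n y | (val w < gv y k)%N] =
    [set (inord (gv y l) : 'I_(n + m - 1).+1) | l in [set l : 'I_m | (val l < k)%N]].
  apply/setP => w; rewrite !inE mem_psi; apply/andP/imsetP.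
  - move=> [/existsP [l /eqP hl]]; rewrite hl => hlk.
    exists l; last by apply: val_inj; rewrite /= inord_gv.
    rewrite inE; case: (ltngtP l k) => // [h|e].
      by have := gv_mono h; lia.
    by move: hlk; rewrite (val_inj e) ltnn.
  - move=> [l]; rewrite inE => hlk ->; rewrite /= inord_gv. split; last exact: gv_mono.
    by apply/existsP; exists l.
rewrite card_imset; last exact: psi_inj.
by apply: card_lt_ord; apply: ltnW.
Qed.

Lemma rank_unique w (l : 'I_m) : w \in psi n y -> rank (psi n y) (val w) = l ->
  val w = gv y l.
Proof.
rewrite mem_psi => /existsP [k /eqP hk]; rewrite hk rank_psi => /val_inj <-. by [].
Qed.

Lemma psi_nonneg (k : 'I_m) : y k = Posz `|y k|%N.
Proof. have [h0 _] := hy (leqnn k); by rewrite abszE ger0_norm. Qed.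

End Psi.

Lemma symdiff_nat (m : nat) (a b : 'I_m -> nat) (k0 : 'I_m)
  (ha : forall k l : 'I_m, (k < l)%N -> (a k < a l)%N)
  (hb : forall k l : 'I_m, (k < l)%N -> (b k < b l)%N)
  (hab : forall l, b l = (a l + (l == k0))%N) (t : nat) :
  ((~~ [exists l, t == b l]) && [exists l, t == a l]) ||
  ((~~ [exists l, t == a l]) && [exists l, t == b l]) = (t == a k0) || (t == a k0 + 1)%N.
Proof.
have hne : forall l, l != k0 -> a l != a k0.
  move=> l hl; case: (ltngtP l k0) => [h|h|h].
  - by have := ha _ _ h; lia.
  - by have := ha _ _ h; lia.
  - by move: hl; rewrite (val_inj h) eqxx.
apply/idP/idP.
- case/orP => /andP [/existsP nb /existsP [l /eqP el]].
  + case: (eqVneq l k0) => [e|hl]; first by rewrite el e eqxx.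
    by exfalso; apply: nb; exists l; rewrite el hab (negbTE hl) addn0.
  + case: (eqVneq l k0) => [e|hl]; first by rewrite el hab e eqxx; apply/orP; right.
    by exfalso; apply: nb; exists l; rewrite el hab (negbTE hl) addn0.
- case/orP => /eqP ->.
  + apply/orP; left; apply/andP; split; last by apply/existsP; exists k0.
    apply/existsP => -[l /eqP e]; move: e; rewrite hab.
    case: (eqVneq l k0) => [->|hl]; first lia.
    by rewrite addn0 => e; move: (hne l hl); rewrite e eqxx.
  + apply/orP; right; apply/andP; split; last by apply/existsP; exists k0; rewrite hab eqxx.
    apply/existsP => -[l /eqP e].
    case: (ltngtP l k0) => [h|h|h].
    * by have := ha _ _ h; lia.
    * have := hb _ _ h; rewrite !hab eqxx.
      have -> : (l == k0) = false by apply/eqP => el; move: h; rewrite el ltnn.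
      lia.
    * by move: e; rewrite (val_inj h); lia.
Qed.

Lemma sd_split (T : finType) (A B : {set T}) u v : #|A| = #|B| -> u != v ->
  A :\: B :|: B :\: A = [set u; v] ->
  (u \in A :\: B /\ v \in B :\: A) \/ (v \in A :\: B /\ u \in B :\: A).
Proof.
move=> hc huv hsd.
have hu : u \in A :\: B :|: B :\: A by rewrite hsd !inE eqxx.
have hv : v \in A :\: B :|: B :\: A by rewrite hsd !inE eqxx orbT.
have both : forall (A B : {set T}), #|A| = #|B| -> A :\: B :|: B :\: A = [set u; v] ->
    u \in A :\: B -> v \in A :\: B -> False.
  move=> A' B' hc' hsd' hu' hv'.
  have e0 : B' :\: A' = set0.
    apply/setP => w; rewrite in_set0; apply/negbTE/negP => hw.
    have : w \in [set u; v] by rewrite -hsd' inE hw orbT.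
    rewrite !inE => /orP [] /eqP ew; move: hw; rewrite ew !inE.
    - by move: hu'; rewrite !inE => /andP [nb ua] /andP [_ ub]; rewrite ub in nb.
    - by move: hv'; rewrite !inE => /andP [nb ua] /andP [_ ub]; rewrite ub in nb.
  have h2 : #|[set u; v]| <= #|A' :\: B'|.
    by apply/subset_leq_card/subsetP => w'; rewrite !inE => /orP [] /eqP ->; [move: hu'|move: hv']; rewrite inE.
  move: h2; rewrite cards2 huv /=.
  have := cardsID B' A'; have := cardsID A' B'; rewrite e0 cards0 hc' setIC; lia.
move: hu hv; rewrite !inE.
case hA : (u \in A); case hB : (u \in B); case vA : (v \in A); case vB : (v \in B) => //= _ _.
- by exfalso; apply: (both A B) => //; rewrite !inE ?hA ?hB ?vA ?vB.
- by left.
- by right.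
- by exfalso; apply: (both B A); rewrite ?(setUC (B :\: A)) // !inE ?hA ?hB ?vA ?vB.
Qed.


Lemma core m n (y z : {ffun 'I_m -> int}) (hy : delta_vertex n y) (hz : delta_vertex n z)
  (u v : 'I_(n + m - 1).+1) :
  u \in psi n y :\: psi n z -> v \in psi n z :\: psi n y -> val v = (val u + 1)%N ->
  (forall w, w != u -> w != v -> (w \in psi n y) = (w \in psi n z)) ->
  exists k0, forall l, `|z l|%N = (`|y l| + (l == k0))%N.
Proof.
move=> hu hv huv hag.
move: hu hv; rewrite !inE => /andP [uB uA] /andP [vA vB].
have := uA; rewrite mem_psi // => /existsP [k0 /eqP hk0].
exists k0 => l.
suff : gv z l = (gv y l + (l == k0))%N by rewrite /gv; lia.
case: (eqVneq l k0) => [->|hl].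
- rewrite /= -hk0 -huv; symmetry; apply: (rank_unique hz vB).
  rewrite -(rank_psi hy k0) -hk0 /rank; apply: eq_card => w; rewrite !inE huv.
  case: (eqVneq w u) => [->|wu]; first by rewrite (negbTE uB) ltnn andbF.
  case: (eqVneq w v) => [->|wv]; first by rewrite (negbTE vA) huv addn1 ltnn andbF.
  rewrite hag // addn1 ltnS leq_eqVlt.
  have -> : (val w == val u) = false by apply/negbTE; rewrite val_eqE.
  by [].
- rewrite /= addn0.
  pose w : 'I_(n + m - 1).+1 := inord (gv y l).
  have hw : val w = gv y l by rewrite /= inord_gv.
  have wA : w \in psi n y by apply/imsetP; exists l.
  have wu : w != u.
    apply/negP => /eqP e; move: hw; rewrite e hk0 => /(gv_inj hy) e2.
    by move: hl; rewrite e2 eqxx.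
  have wv : w != v by apply/negP => /eqP e; move: wA; rewrite e (negbTE vA).
  have wB : w \in psi n z by rewrite -hag.
  clearbody w.
  rewrite -hw; symmetry; apply: (rank_unique hz wB).
  rewrite -(rank_psi hy l) -hw /rank.
  case: (ltnP (val w) (val u)) => hwu.
  + apply: eq_card => x; rewrite !inE.
    case: (ltnP (val x) (val w)) => hx; last by rewrite !andbF.
    rewrite hag //; apply/negP => /eqP e; move: hx; rewrite e.
    * by move=> h; move: (ltn_trans h hwu); rewrite ltnn.
    * by rewrite huv addn1 => h; move: (ltn_trans (ltn_trans (ltnSn _) h) hwu); rewrite ltnn.
  + symmetry; apply: (@card_swap _ _ _ u v).
    * by rewrite !inE uA /=; move: hwu; rewrite leq_eqVlt val_eqE eq_sym (negbTE wu).
    * rewrite !inE vB /= huv; move: hwu; rewrite leq_eqVlt val_eqE eq_sym (negbTE wu) /=.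
      have h1 : val w != (val u + 1)%N by rewrite -huv val_eqE.
      by move=> h; rewrite ltn_neqAle eq_sym h1 addn1.
    * apply/setP => x; rewrite !inE.
      case: (eqVneq x u) => [->|xu]; first by rewrite (negbTE uB) /= andbF.
      case: (eqVneq x v) => [->|xv]; first by rewrite (negbTE vA).
      by rewrite hag.
Qed.

Lemma fwd m n (y z : {ffun 'I_m -> int}) (hy : delta_vertex n y) (hz : delta_vertex n z)
  (k0 : 'I_m) : (forall l, `|z l|%N = (`|y l| + (l == k0))%N) ->
  token_adj (psi n y) (psi n z).
Proof.
move=> H.
have hab : forall l, gv z l = (gv y l + (l == k0))%N by move=> l; rewrite /gv H addnAC.
have hk : gv z k0 = (gv y k0 + 1)%N by rewrite hab eqxx.
exists (inord (gv y k0)), (inord (gv z k0)); split.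
  by rewrite /path_edge /= !inord_gv // hk addn1 eqxx.
apply/setP => w; rewrite !inE !mem_psi // -!val_eqE /= !inord_gv // hk.
exact: (symdiff_nat (gv_mono hy) (gv_mono hz) hab).
Qed.

Lemma token_adj_sym N (A B : {set 'I_N.+1}) : token_adj A B -> token_adj B A.
Proof. by move=> [u [v [pe sd]]]; exists u, v; rewrite setUC. Qed.

Lemma sd_agree (T : finType) (A B : {set T}) u v :
  A :\: B :|: B :\: A = [set u; v] ->
  forall w, w != u -> w != v -> (w \in A) = (w \in B).
Proof.
move=> sd w wu wv; have : w \notin [set u; v] by rewrite !inE negb_or wu wv.
by rewrite -sd !inE; case: (w \in A); case: (w \in B).
Qed.

Lemma ffun_nat m n (y : {ffun 'I_m -> int}) : delta_vertex n y ->
  y = [ffun k => Posz `|y k|%N].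
Proof. by move=> hy; apply/ffunP => k; rewrite ffunE -(psi_nonneg hy). Qed.

Lemma psi_surj m n (hm : (0 < m)%N) (A : {set 'I_(n + m - 1).+1}) : #|A| = m ->
  exists2 y, delta_vertex n y & psi n y = A.
Proof.
move=> hA.
pose rk (u : 'I_(n + m - 1).+1) := rank A (val u).
have rk_mono : forall u v : 'I_(n + m - 1).+1, (val v <= val u)%N -> (rk v <= rk u)%N.
  move=> u v h; apply/subset_leq_card/subsetP => w; rewrite !inE => /andP [-> hw] /=.
  exact: leq_trans hw h.
have rk_strict : forall u v : 'I_(n + m - 1).+1, u \in A -> (val u < val v)%N -> (rk u < rk v)%N.
  move=> u v hu h; rewrite /rk /rank.
  have hsub : u |: [set w in A | (val w < val u)%N] \subset [set w in A | (val w < val v)%N].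
    apply/subsetP => w; rewrite !inE => /orP [/eqP -> | /andP [wa ww]].
      by rewrite hu h.
    by rewrite wa (ltn_trans ww h).
  by have := subset_leq_card hsub; rewrite cardsU1 inE ltnn andbF.
have rk_lt : forall u, u \in A -> (rk u < m)%N.
  move=> u hu; rewrite -hA (cardsD1 u A) hu add1n ltnS.
  apply/subset_leq_card/subsetP => w; rewrite !inE => /andP [wa hw]; rewrite wa andbT.
  by apply/negP => /eqP e; move: hw; rewrite e ltnn.
pose d : 'I_m := Ordinal hm.
pose h u : 'I_m := insubd d (rk u).
have hval : forall u, u \in A -> val (h u) = rk u by move=> u hu; rewrite val_insubd rk_lt.
have h_inj : {in A &, injective h}.
  move=> u v hu hv e; have e2 : rk u = rk v by rewrite -hval // e hval.
  case: (ltngtP (val u) (val v)) => [l|l|l]; last exact: val_inj.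
  - by have := rk_strict _ _ hu l; rewrite e2 ltnn.
  - by have := rk_strict _ _ hv l; rewrite e2 ltnn.
have himg : h @: A = setT.
  by apply/eqP; rewrite eqEcard subsetT cardsT card_ord /= card_in_imset // hA.
have hex : forall k : 'I_m, exists2 u, u \in A & rk u = k.
  move=> k; have : k \in h @: A by rewrite himg inE.
  by case/imsetP => u hu e; exists u => //; rewrite -hval // -e.
pose a (k : 'I_m) := odflt ord0 [pick u in A | rk u == k].
have ha : forall k, a k \in A /\ rk (a k) = k.
  move=> k; rewrite /a; case: pickP => [u /andP [hu /eqP e] | hn] //=.
  by exfalso; have [u hu e] := hex k; have := hn u; rewrite hu e eqxx.
have a_mono : forall k l : 'I_m, (k < l)%N -> (val (a k) < val (a l))%N.
  move=> k l kl; rewrite ltnNge; apply/negP => hle.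
  have := rk_mono _ _ hle; rewrite (ha k).2 (ha l).2; rewrite leqNgt kl.
  by [].
pose A' j := val (a (insubd d j)).
have claim : forall dd i, (i + dd < m)%N -> (A' i + dd <= A' (i + dd))%N.
  elim=> [|dd IH] i hi; first by rewrite !addn0.
  have := IH i ltac:(lia).
  have := a_mono (insubd d (i + dd)) (insubd d (i + dd.+1)).
  rewrite !val_insubd.
  have -> : (i + dd < m)%N = true by apply/idP; lia.
  have -> : (i + dd.+1 < m)%N = true by apply/idP; lia.
  rewrite /A'. move=> h1 h2; have := h1 ltac:(lia); lia.
have hA'k : forall k : 'I_m, A' k = val (a k) by move=> k; rewrite /A' valKd.
have a_ge : forall k : 'I_m, (k <= val (a k))%N.
  by move=> k; have := claim k 0 (ltn_ord k); rewrite hA'k; lia.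
pose y := [ffun k : 'I_m => Posz (val (a k) - k)%N].
have hy : delta_vertex n y.
  move=> i j ij; rewrite !ffunE.
  have c1 := claim (j - i)%N i ltac:(have := ltn_ord j; lia).
  have e1 : (i + (j - i))%N = j by lia.
  rewrite e1 in c1; move: c1; rewrite !hA'k => c1.
  have c2 := claim (m - 1 - j)%N j ltac:(have := ltn_ord j; lia).
  rewrite hA'k in c2.
  have c3 : (A' (j + (m - 1 - j)) < (n + m - 1).+1)%N by exact: ltn_ord.
  move: c2 c3; move: (A' (j + (m - 1 - j))) => B c2 c3.
  have := a_ge i; have := a_ge j.
  move: c1 c2; rewrite /=; move: (nat_of_ord (a i)) (nat_of_ord (a j)) => ai aj.
  have := ltn_ord j; lia.
exists y => //.
apply/eqP; rewrite eqEcard card_psi // hA leqnn andbT.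
apply/subsetP => w /imsetP [k _ ->].
have -> : (inord (gv y k) : 'I_(n + m - 1).+1) = a k.
  apply: val_inj; rewrite /= inord_gv // /gv ffunE.
  by have := a_ge k; move=> hk; rewrite absz_nat subnK.
exact: (ha k).1.
Qed.

Lemma part2 m n (hm : (0 < m)%N) :
  is_graph_iso (@delta_vertex m n) (@lattice_adj m)
    (@token_vertex m (n + m - 1)) (@token_adj (n + m - 1)) (psi n).
Proof.
split.
- by move=> y hy; exact: card_psi hy.
- move=> y z hy hz he; apply/ffunP => k.
  have : (inord (gv y k) : 'I_(n + m - 1).+1) \in psi n z.
    by rewrite -he; apply/imsetP; exists k.
  rewrite mem_psi // => /existsP [l /eqP hl]; move: hl; rewrite /= inord_gv // => hl.
  have hkl : k = l.
    apply: val_inj; rewrite /= -(rank_psi hy k) -(rank_psi hz l) he hl //.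
  move: hl; rewrite -hkl /gv => hl.
  by rewrite (psi_nonneg hy) (psi_nonneg hz); congr Posz; lia.
- by move=> A hA; apply: psi_surj.
- move=> y z hy hz.
  have -> : lattice_adj y z = lattice_adj [ffun k => Posz `|y k|%N] [ffun k => Posz `|z k|%N].
    by rewrite -(ffun_nat hy) -(ffun_nat hz).
  rewrite lattice_adjP; split.
  + move=> [k0 [H|H]].
    * exact: (@fwd m n y z hy hz k0 H).
    * by apply: token_adj_sym; exact: (@fwd m n z y hz hy k0 H).
  + move=> [u [v [pe sd]]].
    have huv : u != v.
      by apply/negP => /eqP e; move: pe; rewrite /path_edge e orbb => /eqP; lia.
    have hag := sd_agree sd.
    have hag' : forall w, w != v -> w != u -> (w \in psi n z) = (w \in psi n y).
      by move=> w wv wu; rewrite hag.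
    have hc : #|psi n y| = #|psi n z| by rewrite !card_psi.
    case: (sd_split hc huv sd) => [[hu hv]|[hv hu]];
      case/orP: pe => /eqP pe.
    * by have [k0 H] := core hy hz hu hv (etrans (esym pe) (esym (addn1 _))) hag; exists k0; left.
    * by have [k0 H] := core hz hy hv hu (etrans (esym pe) (esym (addn1 _))) hag'; exists k0; right.
    * by have [k0 H] := core hz hy hu hv (etrans (esym pe) (esym (addn1 _))) (fun w wu wv => hag' w wv wu); exists k0; right.
    * have hag2 : forall w, w != v -> w != u -> (w \in psi n y) = (w \in psi n z).
        by move=> w wv wu; rewrite hag.
      by have [k0 H] := core hy hz hv hu (etrans (esym pe) (esym (addn1 _))) hag2; exists k0; left.
Qed.

Theorem mainTheorem9 (m n : nat) (hm : (1 <= m)%N) (hn : (1 <= n)%N) :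
  is_graph_iso (@redpow_vertex m n) (@redpow_adj m)
               (@delta_vertex m n) (@lattice_adj m) (@phi m)
  /\ graphs_isomorphic (@redpow_vertex m n) (@redpow_adj m)
                       (@token_vertex m (n + m - 1)) (@token_adj (n + m - 1)).
Proof.
split; first exact: part1.
exists (fun x => psi n (phi x)).
exact: iso_comp (part1 n hm) (part2 n hm).
Qed.
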